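(* Let $G$ be a Polish group, $d$, $G_0$, $\mathcal L(G,d)$ and $X\subseteq \mathcal L(G,d)^{\mathbb Q^{<\mathbb N}}$ as in the context. Then $X$ is invariant under the action of $G$: if $\vec f\in X$ and $g\in G$ then $g\cdot\vec f\in X$.
   Context: Let $G$ be a Polish group, $d$ a compatible right-invariant metric on $G$ (i.e. $d(g_0h,g_1h)=d(g_0,g_1)$) bounded by $1$, and $G_0$ a countable dense subgroup of $G$. Let $\mathcal L(G,d)$ be the set of functions $f:G\to[0,1]$ with $|f(g_1)-f(g_2)|\le d(g_1,g_2)$ for all $g_1,g_2$. Let $\mathbb Q^{<\mathbb N}$ be the set of finite sequences of rationals; for $s\in\mathbb Q^{<\mathbb N}$ and rationals $a_1,\dots,a_k$, $sa_1\dots a_k$ denotes the sequence $s$ followed by $a_1,\dots,a_k$ (natural numbers are regarded as rationals). Elements of $\mathcal L(G,d)^{\mathbb Q^{<\mathbb N}}$ are families $\vec f=(f_s)_{s\in\mathbb Q^{<\mathbb N}}$, and $G$ acts by $(g\cdot\vec f)_s(g_0)=f_s(g_0g)$. Let $X$ be the set of $\vec f\in\mathcal L(G,d)^{\mathbb Q^{<\mathbb N}}$ such that, writing $t=sq_0q_1q_2\,0\,m\,n$ and $u=sq_0q_1q_2\,1\,m\,n$: (1) for all $s\in\mathbb Q^{<\mathbb N}$, $g_0\in G_0$, $m,n\in\mathbb N$, $q_0,q_1,q_2,\epsilon\in\mathbb Q\cap(0,1)$ with $0<q_i\pm\epsilon<1$ ($i=0,1,2$): $f_t(g_0)<q_1-\epsilon$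 or $f_s(g_0)\le q_0+\epsilon$; (2) for the same range of parameters: $f_u(g_0)\ge q_2+\epsilon$ or $f_t(g_0)\ge q_1-\epsilon$; (3) for all $s\in\mathbb Q^{<\mathbb N}$, $g_0\in G_0$, $q_0,\epsilon\in\mathbb Q\cap(0,1)$: if $f_s(g_0)<q_0$ then there are $q_1,q_2\in\mathbb Q$, $g_1\in G_0$, $m,n\in\mathbb N$ with $0<q_2<q_1<q_0<1$, $d(g_0,g_1)<\epsilon$, and $f_u(g_1)<q_2$ where $u=sq_0q_1q_2\,1\,m\,n$. *)

(* Defs.v *)
From Stdlib Require Import Reals QArith Qcanon List.
Import ListNotations.
Open Scope R_scope.

Definition is_group {G : Type} (mul : G -> G -> G) (inv : G -> G) (e : G) : Prop :=
  (forall x y z, mul x (mul y z) = mul (mul x y) z) /\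
  (forall x, mul e x = x /\ mul x e = x) /\
  (forall x, mul (inv x) x = e /\ mul x (inv x) = e).

Definition is_metric {G : Type} (d : G -> G -> R) : Prop :=
  (forall x y, 0 <= d x y) /\
  (forall x y, d x y = 0 <-> x = y) /\
  (forall x y, d x y = d y x) /\
  (forall x y z, d x z <= d x y + d y z).

Definition metric_open {G : Type} (d : G -> G -> R) (U : G -> Prop) : Prop :=
  forall x, U x -> exists r, 0 < r /\ forall y, d x y < r -> U y.

Definition metric_cauchy {G : Type} (d : G -> G -> R) (u : nat -> G) : Prop :=
  forall eps, 0 < eps -> exists N, forall m n, (N <= m)%nat -> (N <= n)%nat ->
    d (u m) (u n) < eps.

Definition metric_complete {G : Type} (d : G -> G -> R) : Prop :=
  forall u, metric_cauchy d u ->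
    exists l, forall eps, 0 < eps -> exists N, forall n, (N <= n)%nat -> d (u n) l < eps.

Definition metric_dense {G : Type} (d : G -> G -> R) (A : G -> Prop) : Prop :=
  forall x eps, 0 < eps -> exists a, A a /\ d x a < eps.

Definition countable_set {G : Type} (A : G -> Prop) : Prop :=
  exists enum : nat -> G, forall x, A x <-> exists n, enum n = x.

Definition polish_metric_topology {G : Type} (d : G -> G -> R) : Prop :=
  (exists D : G -> Prop, countable_set D /\ metric_dense d D) /\
  (exists d', is_metric d' /\ metric_complete d' /\
     forall U, metric_open d U <-> metric_open d' U).

Definition polish_group_with_metric {G : Type} (mul : G -> G -> G) (inv : G -> G)
  (e : G) (d : G -> G -> R) : Prop :=
  is_group mul inv e /\ is_metric d /\
  (forall x y eps, 0 < eps -> exists del, 0 < del /\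
     forall x' y', d x x' < del -> d y y' < del -> d (mul x y) (mul x' y') < eps) /\
  (forall x eps, 0 < eps -> exists del, 0 < del /\
     forall x', d x x' < del -> d (inv x) (inv x') < eps) /\
  polish_metric_topology d.

Definition right_invariant {G : Type} (mul : G -> G -> G) (d : G -> G -> R) : Prop :=
  forall g0 g1 h, d (mul g0 h) (mul g1 h) = d g0 g1.

Definition is_subgroup {G : Type} (mul : G -> G -> G) (inv : G -> G) (e : G)
  (H : G -> Prop) : Prop :=
  H e /\ (forall x y, H x -> H y -> H (mul x y)) /\ (forall x, H x -> H (inv x)).

Definition in_L {G : Type} (d : G -> G -> R) (f : G -> R) : Prop :=
  (forall g, 0 <= f g <= 1) /\
  (forall g1 g2, Rabs (f g1 - f g2) <= d g1 g2).

Definition nat2Qc (n : nat) : Qc := Q2Qc (inject_Z (Z.of_nat n)).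

Definition QcR (q : Qc) : R := Q2R (this q).

Definition in_unit_Q (q : Qc) : Prop := 0 < QcR q < 1.

Definition ext (s : list Qc) (q0 q1 q2 : Qc) (b m n : nat) : list Qc :=
  s ++ [q0; q1; q2; nat2Qc b; nat2Qc m; nat2Qc n].

Definition in_X {G : Type} (mul : G -> G -> G) (d : G -> G -> R) (G0 : G -> Prop)
  (F : list Qc -> G -> R) : Prop :=
  (forall s, in_L d (F s)) /\
  (forall s g0 m n q0 q1 q2 eps, G0 g0 ->
     in_unit_Q q0 -> in_unit_Q q1 -> in_unit_Q q2 -> in_unit_Q eps ->
     0 < QcR q0 - QcR eps < 1 -> 0 < QcR q0 + QcR eps < 1 ->
     0 < QcR q1 - QcR eps < 1 -> 0 < QcR q1 + QcR eps < 1 ->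
     0 < QcR q2 - QcR eps < 1 -> 0 < QcR q2 + QcR eps < 1 ->
     F (ext s q0 q1 q2 0 m n) g0 < QcR q1 - QcR eps \/ F s g0 <= QcR q0 + QcR eps) /\
  (forall s g0 m n q0 q1 q2 eps, G0 g0 ->
     in_unit_Q q0 -> in_unit_Q q1 -> in_unit_Q q2 -> in_unit_Q eps ->
     0 < QcR q0 - QcR eps < 1 -> 0 < QcR q0 + QcR eps < 1 ->
     0 < QcR q1 - QcR eps < 1 -> 0 < QcR q1 + QcR eps < 1 ->
     0 < QcR q2 - QcR eps < 1 -> 0 < QcR q2 + QcR eps < 1 ->
     F (ext s q0 q1 q2 1 m n) g0 >= QcR q2 + QcR eps \/
     F (ext s q0 q1 q2 0 m n) g0 >= QcR q1 - QcR eps) /\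
  (forall s g0 q0 eps, G0 g0 -> in_unit_Q q0 -> in_unit_Q eps ->
     F s g0 < QcR q0 ->
     exists q1 q2 g1 m n,
       0 < QcR q2 < QcR q1 /\ QcR q1 < QcR q0 /\ QcR q0 < 1 /\
       G0 g1 /\ d g0 g1 < QcR eps /\
       F (ext s q0 q1 q2 1 m n) g1 < QcR q2).

Definition act {G : Type} (mul : G -> G -> G) (g : G) (F : list Qc -> G -> R) :
  list Qc -> G -> R := fun s g0 => F s (mul g0 g).

(* Main.v *)
Require Import Defs.
From Stdlib Require Import Reals QArith Qcanon List Qreals Lra Lia.
Open Scope R_scope.

Lemma Qc_dense (a b : R) : a < b -> exists q : Qc, a < QcR q < b.
Proof.
  intros Hab.
  set (n := up (/ (b - a))).
  destruct (archimed (/ (b - a))) as [Hn1 Hn2]; fold n in Hn1, Hn2.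
  assert (Hinv : 0 < / (b - a)) by (apply Rinv_0_lt_compat; lra).
  assert (Hnpos : (0 < n)%Z) by (apply lt_IZR; lra).
  set (m := up (a * IZR n)).
  destruct (archimed (a * IZR n)) as [Hm1 Hm2]; fold m in Hm1, Hm2.
  exists (Q2Qc (Qmake m (Z.to_pos n))).
  change (a < Q2R (Qred (Qmake m (Z.to_pos n))) < b).
  assert (E : Q2R (Qred (Qmake m (Z.to_pos n))) = IZR m / IZR n).
  { rewrite (Qeq_eqR _ _ (Qred_correct _)). unfold Q2R; simpl.
    rewrite Z2Pos.id by lia. reflexivity. }
  rewrite E.
  assert (Hnr : 0 < IZR n) by (apply IZR_lt; lia).
  split.
  - apply (Rmult_lt_reg_r (IZR n)); auto. unfold Rdiv. rewrite Rmult_assoc, Rinv_l by lra. lra.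
  - apply (Rmult_lt_reg_r (IZR n)); auto. unfold Rdiv. rewrite Rmult_assoc, Rinv_l by lra.
    assert (IZR n * (b - a) > 1).
    { apply (Rmult_lt_reg_r (/ (b-a))); auto. rewrite Rmult_assoc, Rinv_r by lra. lra. }
    nra.
Qed.

Lemma lip_lo {G : Type} (d : G -> G -> R) (f : G -> R) x y :
  in_L d f -> f y >= f x - d x y.
Proof. intros [_ H]. specialize (H x y). pose proof (Rle_abs (f x - f y)). lra. Qed.
Lemma lip_hi {G : Type} (d : G -> G -> R) (f : G -> R) x y :
  in_L d f -> f y <= f x + d x y.
Proof. intros [_ H]. specialize (H x y). pose proof (Rle_abs (-(f x - f y))); rewrite Rabs_Ropp in *; pose proof (Rle_abs (f x - f y)). lra. Qed.

Theorem lemma2p2 (G : Type) (mul : G -> G -> G) (inv : G -> G) (e : G)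
  (d : G -> G -> R) (G0 : G -> Prop)
  (HG : polish_group_with_metric mul inv e d)
  (Hright : right_invariant mul d)
  (Hbound : forall x y, d x y <= 1)
  (HG0sub : is_subgroup mul inv e G0)
  (HG0count : countable_set G0)
  (HG0dense : metric_dense d G0) :
  forall (F : list Qc -> G -> R) (g : G),
    in_X mul d G0 F -> in_X mul d G0 (act mul g F).
Proof.
  destruct HG as [[Hass [Hid Hinv]] [[Hpos [Hzero [Hsym Htri]]] _]].
  intros F g [HL [H1 [H2 H3]]].
  assert (HLa : forall s, in_L d (act mul g F s)).
  { intros s. destruct (HL s) as [Hb Hl]. split.
    - intros x. apply Hb.
    - intros x y. unfold act. rewrite <- (Hright x y g). apply Hl. }
  split; [exact HLa|]. unfold act.
  split; [|split].
  - intros s g0 m n q0 q1 q2 eps Hg0 U0 U1 U2 Ue A0 B0 A1 B1 A2 B2.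
    set (h := mul g0 g).
    destruct (Rlt_dec (F (ext s q0 q1 q2 0 m n) h) (QcR q1 - QcR eps)) as [Hl|Hl]; [left; exact Hl|].
    destruct (Rle_dec (F s h) (QcR q0 + QcR eps)) as [Hr|Hr]; [right; exact Hr|].
    exfalso. apply Rnot_le_lt in Hr. apply Rnot_lt_le in Hl.
    set (eta := F s h - (QcR q0 + QcR eps)).
    set (del := Rmin (eta/3) (Rmin (1 - QcR q0 - QcR eps) (Rmin (1 - QcR q1 - QcR eps)
                 (Rmin (1 - QcR q2 - QcR eps) (Rmin (QcR q0 - QcR eps)
                 (Rmin (QcR q1 - QcR eps) (QcR q2 - QcR eps))))))).
    assert (Hd1 := Rmin_l (eta/3) (Rmin (1 - QcR q0 - QcR eps) (Rmin (1 - QcR q1 - QcR eps)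
                 (Rmin (1 - QcR q2 - QcR eps) (Rmin (QcR q0 - QcR eps)
                 (Rmin (QcR q1 - QcR eps) (QcR q2 - QcR eps))))))).
    assert (Hd2 := Rmin_r (eta/3) (Rmin (1 - QcR q0 - QcR eps) (Rmin (1 - QcR q1 - QcR eps)
                 (Rmin (1 - QcR q2 - QcR eps) (Rmin (QcR q0 - QcR eps)
                 (Rmin (QcR q1 - QcR eps) (QcR q2 - QcR eps))))))).
    fold del in Hd1, Hd2.
    repeat match type of Hd2 with _ <= Rmin ?a ?b =>
      pose proof (Rmin_l a b); pose proof (Rmin_r a b);
      let H := fresh in assert (H : del <= b) by lra; let o := fresh "o" in rename Hd2 into o; rename H into Hd2 end.
    assert (Hdpos : 0 < del).
    { unfold del. repeat apply Rmin_glb_lt; unfold eta in *; lra. }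
    destruct (Qc_dense (QcR eps) (QcR eps + del)) as [eps' [E1 E2]]; [lra|].
    destruct (HG0dense h (QcR eps' - QcR eps)) as [h' [Hh' Hdh]]; [lra|].
    unfold in_unit_Q in *.
    destruct (H1 s h' m n q0 q1 q2 eps' Hh' U0 U1 U2) as [C|C]; try lra.
    + pose proof (lip_lo d _ h h' (HL (ext s q0 q1 q2 0 m n))). lra.
    + pose proof (lip_lo d _ h h' (HL s)). unfold eta in *. lra.
  - intros s g0 m n q0 q1 q2 eps Hg0 U0 U1 U2 Ue A0 B0 A1 B1 A2 B2.
    set (h := mul g0 g).
    destruct (Rge_dec (F (ext s q0 q1 q2 1 m n) h) (QcR q2 + QcR eps)) as [Hl|Hl]; [left; exact Hl|].
    destruct (Rge_dec (F (ext s q0 q1 q2 0 m n) h) (QcR q1 - QcR eps)) as [Hr|Hr]; [right; exact Hr|].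
    exfalso. apply Rnot_ge_lt in Hr. apply Rnot_ge_lt in Hl.
    set (del := Rmin (QcR q2 + QcR eps - F (ext s q0 q1 q2 1 m n) h)
                     (QcR q1 - QcR eps - F (ext s q0 q1 q2 0 m n) h)).
    assert (Hd1 := Rmin_l (QcR q2 + QcR eps - F (ext s q0 q1 q2 1 m n) h)
                     (QcR q1 - QcR eps - F (ext s q0 q1 q2 0 m n) h)).
    assert (Hd2 := Rmin_r (QcR q2 + QcR eps - F (ext s q0 q1 q2 1 m n) h)
                     (QcR q1 - QcR eps - F (ext s q0 q1 q2 0 m n) h)).
    fold del in Hd1, Hd2.
    assert (Hdpos : 0 < del) by (unfold del; apply Rmin_glb_lt; lra).
    destruct (HG0dense h del Hdpos) as [h' [Hh' Hdh]].
    pose proof (lip_hi d _ h h' (HL (ext s q0 q1 q2 0 m n))).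
    pose proof (lip_hi d _ h h' (HL (ext s q0 q1 q2 1 m n))).
    destruct (H2 s h' m n q0 q1 q2 eps Hh' U0 U1 U2 Ue A0 B0 A1 B1 A2 B2); lra.
  - intros s g0 q0 eps Hg0 U0 Ue Hlt.
    set (h := mul g0 g) in *.
    unfold in_unit_Q in *.
    destruct (Qc_dense 0 (QcR eps / 2)) as [eps' [E1 E2]]; [lra|].
    set (r := Rmin (QcR q0 - F s h) (QcR eps / 4)).
    assert (Hr1 := Rmin_l (QcR q0 - F s h) (QcR eps / 4)).
    assert (Hr2 := Rmin_r (QcR q0 - F s h) (QcR eps / 4)).
    fold r in Hr1, Hr2.
    assert (Hrpos : 0 < r) by (unfold r; apply Rmin_glb_lt; lra).
    destruct (HG0dense h r Hrpos) as [h' [Hh' Hdh]].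
    pose proof (lip_hi d _ h h' (HL s)).
    destruct (H3 s h' q0 eps' Hh' U0 ltac:(split; lra) ltac:(lra))
      as [q1 [q2 [g1' [m [n [K1 [K2 [K3 [K4 [K5 K6]]]]]]]]]].
    set (k := mul g1' (inv g)).
    assert (Hk : mul k g = g1').
    { unfold k. rewrite <- Hass. destruct (Hinv g) as [-> _]. apply Hid. }
    set (r2 := Rmin (QcR q2 - F (ext s q0 q1 q2 1 m n) g1') (QcR eps / 4)).
    assert (Hs1 := Rmin_l (QcR q2 - F (ext s q0 q1 q2 1 m n) g1') (QcR eps / 4)).
    assert (Hs2 := Rmin_r (QcR q2 - F (ext s q0 q1 q2 1 m n) g1') (QcR eps / 4)).
    fold r2 in Hs1, Hs2.
    assert (Hr2pos : 0 < r2) by (unfold r2; apply Rmin_glb_lt; lra).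
    destruct (HG0dense k r2 Hr2pos) as [g1 [Hg1 Hdg1]].
    exists q1, q2, g1, m, n.
    assert (Ed1 : d (mul k g) (mul g1 g) = d k g1) by apply Hright.
    rewrite Hk in Ed1.
    assert (Ed2 : d (mul g0 g) (mul k g) = d g0 k) by apply Hright.
    rewrite Hk in Ed2. fold h in Ed2.
    pose proof (lip_hi d _ g1' (mul g1 g) (HL (ext s q0 q1 q2 1 m n))).
    pose proof (Htri g0 k g1). pose proof (Htri h h' g1').

    repeat split; try lra; auto.
Qed.
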